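(* Let $F:[n]^\ell\to\mathbb{R}$ be permutation-invariant. Then: (1) for every $a\in[n]$, every integer $0\le i\le\ell-1$ and every $X\in[n]^i$, $f_{i+1,F}(a,X)=f_{i,F|_{\{a\}}}(X)-f_{i,F}(X)$; (2) for every integer $0\le i\le\ell$ and every $X\in[n]^i$, $$f_{i,F}(X)=\sum_{B\subseteq\{1,\dots,i\}}(-1)^{i-|B|}\,\delta_{X|_B}(F),$$ where $X|_B$ is the ordered tuple of entries of $X$ with indices in $B$.
   Context: $[n]=\{0,\dots,n-1\}=\mathbb{Z}/n\mathbb{Z}$, $\chi_t(x)=e^{2\pi itx/n}$, $\chi_T(x)=\prod_j\chi_{T_j}(x_j)$ for $T\in[n]^m$, and $\hat F(T)=\mathbb{E}_{Y\in[n]^m}[F(Y)\overline{\chi_T(Y)}]$ for $F:[n]^m\to\mathbb{R}$, so $F=\sum_T\hat F(T)\chi_T$. $F$ is permutation-invariant if $F(x_1,\dots,x_m)=F(x_{\pi(1)},\dots,x_{\pi(m)})$ for every permutation $\pi$. For $F:[n]^m\to\mathbb{R}$ and $0\le i\le m$, $f_{i,F}:[n]^i\to\mathbb{C}$ is $f_{i,F}(x_1,\dots,x_i)=\sum_{(T_1,\dots,T_i)\in([n]\setminus\{0\})^i}\hat F(T_1,\dots,T_i,0,\dots,0)\chi_{T_1,\dots,T_i}(x_1,\dots,x_i)$. For $A=(a_1,\dots,a_r)\in[n]^r$, $r\le m-1$, the restriction $F|_A:[n]^{m-r}\to\mathbb{R}$ is $F|_A(x)=F(a_1,\dots,a_r,x)$,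 and $\delta_A(F)=\mathbb{E}_{x\in[n]^{m-r}}[F|_A(x)]$; for $A$ empty, $F|_A=F$ and $\delta_A(F)=\mathbb{E}[F]$. *)

(* Defs.v *)
From HB Require Import structures.
From mathcomp Require Import all_boot all_order all_algebra fingroup perm.
From mathcomp Require Import reals trigo.
From mathcomp Require Import complex.
Set Implicit Arguments. Unset Strict Implicit. Unset Printing Implicit Defensive.
Import Order.TTheory GRing.Theory Num.Theory.
Local Open Scope ring_scope.
Local Open Scope complex_scope.

Section Fourier.
Variables (R : realType) (n : nat).

Definition omega : R[i] := (cos (2 * pi / n%:R)) +i* (sin (2 * pi / n%:R)).

Definition chi (t x : nat) : R[i] := omega ^+ (t * x).

(* chi_T(x) = prod_j chi_{T_j}(x_j); frequencies T given as a seq nat,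
   entries beyond size T are 0 (this realises the zero padding). *)
Definition chiT (T : seq nat) (k : nat) (x : k.-tuple 'I_n) : R[i] :=
  \prod_(j < k) chi (nth 0%N T j) (tnth x j).

Definition fourier (k : nat) (F : k.-tuple 'I_n -> R) (T : seq nat) : R[i] :=
  ((n ^ k)%:R)^-1 * \sum_(Y : k.-tuple 'I_n) (F Y)%:C * conjc (chiT T Y).

Definition fpart (k : nat) (F : k.-tuple 'I_n -> R) (i : nat)
    (X : i.-tuple 'I_n) : R[i] :=
  \sum_(T : i.-tuple 'I_n | all (fun t : 'I_n => val t != 0%N) T)
     fourier F (map val T) * chiT (map val T) X.

Definition liftF (k : nat) (F : k.-tuple 'I_n -> R) (s : seq 'I_n) : R :=
  match @insub _ _ (k.-tuple 'I_n) s with Some t => F t | None => 0 end.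

Definition restr (k : nat) (F : k.-tuple 'I_n -> R) (A : seq 'I_n)
    : (k - size A).-tuple 'I_n -> R :=
  fun x => liftF F (cat A (tval x)).
Arguments restr {k} F A.

Definition delta (k : nat) (F : k.-tuple 'I_n -> R) (A : seq 'I_n) : R :=
  ((n ^ (k - size A))%:R)^-1 * \sum_(x : (k - size A).-tuple 'I_n) restr F A x.

Definition perm_invariant (k : nat) (F : k.-tuple 'I_n -> R) : Prop :=
  forall (s : 'S_k) (x : k.-tuple 'I_n), F x = F [tuple tnth x (s j) | j < k].

End Fourier.
Arguments restr {R n k} F A.

(* Main.v *)
Require Import Defs.
From HB Require Import structures.
From mathcomp Require Import all_boot all_order all_algebra fingroup perm.
From mathcomp Require Import reals trigo.
From mathcomp Require Import complex.
From mathcomp Require Import ring lra.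
Import Order.TTheory GRing.Theory Num.Theory.
Local Open Scope ring_scope.
Local Open Scope complex_scope.
Lemma sum_tuple_eq (C : nmodType) (T : finType) k l (e : k = l) (f : seq T -> C) :
  \sum_(x : k.-tuple T) f x = \sum_(x : l.-tuple T) f x.
Proof. by subst. Qed.

Section S.
Variable R : realType.
Variable n : nat.
Hypothesis hn : (0 < n)%N.
Lemma sum_tuple_prod (C : comNzRingType) i m (Phi : 'I_i -> 'I_m -> C) :
  \sum_(T : i.-tuple 'I_m) \prod_(j < i) Phi j (tnth T j) =
  \prod_(j < i) \sum_(t : 'I_m) Phi j t.
Proof.
rewrite bigA_distr_bigA /=.
rewrite (reindex (fun f : {ffun 'I_i -> 'I_m} => [tuple f j | j < i])) /=.
  by apply: eq_bigr => f _; apply: eq_bigr => j _; rewrite tnth_mktuple.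
exists (fun T : i.-tuple 'I_m => [ffun j => tnth T j]) => f _.
  by apply/ffunP => j; rewrite ffunE tnth_mktuple.
by apply: eq_from_tnth => j; rewrite tnth_mktuple ffunE.
Qed.

Lemma sum_tuple_cons (C : nmodType) (T : finType) m (f : m.+1.-tuple T -> C) :
  \sum_(Y : m.+1.-tuple T) f Y = \sum_(a : T) \sum_(x : m.-tuple T) f [tuple of a :: x].
Proof.
rewrite pair_big /=.
rewrite (reindex (fun p : T * m.-tuple T => [tuple of p.1 :: p.2])) /=; first by [].
exists (fun Y : m.+1.-tuple T => (thead Y, [tuple of behead Y])) => [[a x] _|Y _].
  by congr (_, _); apply: val_inj.
by rewrite [RHS]tuple_eta; apply: val_inj.
Qed.

Lemma perm_ext l (p : seq 'I_l) : uniq p ->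
  exists s : 'S_l, forall k : 'I_l, (k < size p)%N -> s k = nth k p k.
Proof.
move=> up.
set q := p ++ [seq j <- enum 'I_l | j \notin p].
have uq : uniq q.
  rewrite cat_uniq up filter_uniq ?enum_uniq // andbT /=.
  by apply/hasPn => j; rewrite mem_filter => /andP [].
have sq : size q = l.
  have : perm_eq q (enum 'I_l).
    apply: uniq_perm => //; first exact: enum_uniq.
    move=> j; rewrite mem_enum mem_cat mem_filter mem_enum andbT; by case: (j \in p).
  by move/perm_size; rewrite size_enum_ord.
have finj : injective (fun k : 'I_l => nth k q k).
  move=> k1 k2 /=; rewrite (set_nth_default k1 k2) ?sq // => /eqP.
  by rewrite nth_uniq ?sq // => /eqP /val_inj.
exists (perm finj) => k hk; rewrite permE /q nth_cat hk //.
Qed.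

Definition tpm {l} (Y : l.-tuple 'I_n) (s : 'S_l) : l.-tuple 'I_n := [tuple tnth Y (s j) | j < l].

Lemma tpmK l (Y : l.-tuple 'I_n) (s : 'S_l) : tpm (tpm Y s^-1) s = Y.
Proof. by apply: eq_from_tnth => j; rewrite !tnth_mktuple permK. Qed.
Lemma tpmKV l (Y : l.-tuple 'I_n) (s : 'S_l) : tpm (tpm Y s) s^-1 = Y.
Proof. by apply: eq_from_tnth => j; rewrite !tnth_mktuple permKV. Qed.

Lemma perm_reindex l (F : l.-tuple 'I_n -> R) (HF : perm_invariant F) (s : 'S_l)
  (G : l.-tuple 'I_n -> R[i]) :
  \sum_Y (F Y)%:C * G Y = \sum_Y (F Y)%:C * G (tpm Y s).
Proof.
rewrite [RHS](reindex (fun Y => tpm Y s^-1)) /=.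
  apply: eq_bigr => Y _; rewrite tpmK; congr (_%:C * _).
  by rewrite [RHS](HF s) -/(tpm _ _) tpmK.
by exists (fun Y => tpm Y s) => Y _; [rewrite tpmK | rewrite tpmKV].
Qed.

Lemma prefix_sum (H : seq 'I_n -> R[i]) (s : seq 'I_n) l : (size s <= l)%N ->
  \sum_(Y : l.-tuple 'I_n) H Y * (take (size s) Y == s)%:R =
  \sum_(x : (l - size s).-tuple 'I_n) H (s ++ x).
Proof.
elim: s l H => [|a s IH] l H hl.
  by rewrite subn0; apply: eq_bigr => Y _; rewrite take0 eqxx mulr1.
case: l hl => [//|l] hl.
rewrite sum_tuple_cons (bigD1 a) //= [X in _ + X]big1 ?addr0.
  rewrite -(IH l (fun y => H (a :: y))) //.
  by apply: eq_bigr => x _; rewrite eqseq_cons eqxx.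
move=> b hb; apply: big1 => x _.
by rewrite eqseq_cons (negbTE hb) mulr0.
Qed.

Let th : R := 2 * pi / n%:R.
Let x0 : 'I_n := Ordinal hn.

Lemma omegaX k : omega R n ^+ k = cos (k%:R * th) +i* sin (k%:R * th).
Proof.
elim: k => [|k IH]; first by rewrite expr0 mul0r cos0 sin0.
rewrite exprS IH /omega -/th [RHS]/= -addn1 natrD mulrDl mul1r cosD sinD.
simpl. congr (_ +i* _); ring.
Qed.

Lemma omega_prim : n.-primitive_root (omega R n).
Proof.
have nz : (n%:R : R) != 0 by rewrite pnatr_eq0 -lt0n.
have on1 : omega R n ^+ n = 1.
  rewrite omegaX; have -> : n%:R * th = pi *+ 2 by rewrite /th mulr2n; field.
  by rewrite cos2pi sin2pi.
case: (prim_order_exists hn on1) => m pm mdn.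
suff nm : n = m by move: pm; rewrite -nm.
have m0 := prim_order_gt0 pm.
case: (ltngtP m n) => // mn; last by have := dvdn_leq hn mdn; rewrite leqNgt mn.
have := prim_expr_order pm; rewrite omegaX => /(congr1 (@complex.Re R)) /= c1.
have : cos (m%:R * th) < 1; last by rewrite c1 ltxx.
have -> : m%:R * th = (m%:R * pi / n%:R) *+ 2.
  by rewrite /th -mulr_natr; field.
have sx : 0 < sin (m%:R * pi / n%:R : R).

  apply: (@sin_gt0_pi R); apply/andP; split.
    by rewrite divr_gt0 ?mulr_gt0 ?pi_gt0 ?ltr0n.
  rewrite ltr_pdivrMr ?ltr0n // mulrC ltr_pM2l ?pi_gt0 // ltr_nat //.
rewrite cos_mulr2n cos2sin2.
have := exprn_gt0 2 sx; set u := sin _ ^+ 2; rewrite !mulr2n; lra.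
Qed.

Lemma conjcM (a b : R[i]) : conjc (a * b) = conjc a * conjc b.
Proof. by case: a => a1 a2; case: b => b1 b2 /=; congr (_ +i* _); ring. Qed.

Lemma conjcX (a : R[i]) k : conjc (a ^+ k) = conjc a ^+ k.
Proof. elim: k => [|k IH]; first by rewrite !expr0 conjc1. by rewrite !exprS -IH -conjcM. Qed.

Lemma omega_conj : conjc (omega R n) = omega R n ^+ n.-1.
Proof.
have h1 : omega R n * conjc (omega R n) = 1.
  rewrite /omega /=; have := cos2Dsin2 (2 * pi / n%:R : R); rewrite !expr2 => h; congr (_ +i* _); lra.
by rewrite -[RHS]mulr1 -h1 mulrA -exprSr prednK // (prim_expr_order omega_prim) mul1r.
Qed.

Lemma orth (x y : 'I_n) :
  \sum_(t : 'I_n) chi R n t x * conjc (chi R n t y) = ((x == y) * n)%:R.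
Proof.
set w := omega R n ^+ (x + n.-1 * y).
have E t : chi R n t x * conjc (chi R n t y) = w ^+ t.
  rewrite /chi. rewrite conjcX omega_conj /w -!exprM -exprD; congr (_ ^+ _).
  ring.
under eq_bigr => t _ do rewrite E.
have hw : omega R n ^+ y * w = omega R n ^+ x.
  rewrite /w -exprD addnA (addnC y) -addnA -mulSn prednK // exprD mulnC exprM.
  by rewrite exprAC (prim_expr_order omega_prim) expr1n mulr1.
case: eqP => [xy|nxy].
  have -> : w = 1 by move: hw; rewrite xy -{2}(mulr1 (_ ^+ _)) => /mulfI -> //; rewrite expf_neq0 // (prim_root_eq0 omega_prim) -lt0n.
  by rewrite mul1n (eq_bigr (fun=> 1)) ?sumr_const ?card_ord // => i _; rewrite expr1n.
have w1 : w != 1.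
  apply/eqP => w1; apply: nxy; move: hw; rewrite w1 mulr1 => /eqP.
  by rewrite (eq_prim_root_expr omega_prim) !modn_small // => /eqP /val_inj ->.
have wn : w ^+ n = 1 by rewrite /w exprAC (prim_expr_order omega_prim) expr1n.
have := subrX1 w n; rewrite wn subrr => /esym /eqP; rewrite mulf_eq0 subr_eq0 (negbTE w1) /= => /eqP ->.
by rewrite mul0n.
Qed.


Lemma chi0 x : chi R n 0 x = 1.
Proof. by rewrite /chi mul0n expr0. Qed.

Lemma chiT_prefix k (T : seq nat) (Y : k.-tuple 'I_n) i (hi : (i <= k)%N) :
  size T = i ->
  chiT R T Y = \prod_(j < i) chi R n (nth 0%N T j) (tnth Y (widen_ord hi j)).
Proof.
move=> hT; rewrite /chiT.
rewrite [LHS](eq_bigr (fun j : 'I_k => chi R n (nth 0%N T j) (nth x0 Y j))); last by move=> j _; rewrite (tnth_nth x0).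
rewrite [RHS](eq_bigr (fun j : 'I_i => chi R n (nth 0%N T j) (nth x0 Y j))); last by move=> j _; rewrite (tnth_nth x0).
rewrite (big_ord_widen _ (fun j => chi R n (nth 0%N T j) (nth x0 Y j)) hi).
rewrite [RHS]big_mkcond /=; apply: eq_bigr => j _; case: ifP => // hj.
by rewrite nth_default ?chi0 // hT leqNgt hj.
Qed.

Lemma conjc_prod I (r : seq I) (P : pred I) (f : I -> R[i]) :
  conjc (\prod_(j <- r | P j) f j) = \prod_(j <- r | P j) conjc (f j).
Proof. elim/big_rec2: _ => [|j y1 y2 _ <-]; [exact: conjc1 | exact: conjcM]. Qed.

Lemma sumK (x y : 'I_n) :
  \sum_(t : 'I_n) (if t != x0 then chi R n t x * conjc (chi R n t y) else 0)
  = n%:R * (x == y)%:R - 1.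
Proof.
have c1 : conjc (1 : R[i]) = 1 by rewrite /conjc /= oppr0.
have := orth x y; rewrite (bigD1 x0) // !chi0 c1 mulr1 => h.
rewrite -big_mkcond /=; move: h => /=; rewrite natrM mulrC => <-; rewrite addrC addrK.
by apply: eq_bigl. Qed.

Lemma kernel l (F : l.-tuple 'I_n -> R) i (X : i.-tuple 'I_n) (hil : (i <= l)%N) :
  fpart F X = ((n ^ l)%:R)^-1 * \sum_(Y : l.-tuple 'I_n) (F Y)%:C *
     \prod_(j < i) (n%:R * (tnth X j == nth x0 Y j)%:R - 1).
Proof.
rewrite /fpart /fourier.
transitivity (\sum_(T : i.-tuple 'I_n | all (fun t : 'I_n => val t != 0%N) T)
   ((n ^ l)%:R)^-1 * \sum_(Y : l.-tuple 'I_n) (F Y)%:C *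
      (conjc (chiT R (map val T) Y) * chiT R (map val T) X)).
  apply: eq_bigr => T _; rewrite -mulrA big_distrl /=; congr (_ * _).
  by apply: eq_bigr => Y _; rewrite mulrA.
rewrite -big_distrr /= exchange_big /=; congr (_ * _); apply: eq_bigr => Y _.
rewrite -big_distrr /=; congr (_ * _).
have hT (T : i.-tuple 'I_n) (j : 'I_i) : nth 0%N (map val T) j = val (tnth T j).
  by rewrite (nth_map x0) ?size_tuple // -tnth_nth.
transitivity (\sum_(T : i.-tuple 'I_n) \prod_(j < i)
   (fun j t => if t != x0 then chi R n t (tnth X j) * conjc (chi R n t (tnth Y (widen_ord hil j))) else 0) j (tnth T j)).
  rewrite big_mkcond /=; apply: eq_bigr => T _.
  have hall : all (fun t : 'I_n => val t != 0%N) T = [forall j, tnth T j != x0].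
    by apply/all_tnthP/forallP.
  rewrite hall; case: forallP => hf.
    rewrite (@chiT_prefix l _ Y i hil) ?size_map ?size_tuple // conjc_prod /chiT -big_split /=.
    apply: eq_bigr => j _; rewrite hf hT mulrC //.
  have : ~~ [forall j, tnth T j != x0] by apply/forallP.
  rewrite negb_forall => /existsP [j]; rewrite negbK => hj.
  by rewrite (bigD1 j) //= ifN ?mul0r // negbK.
rewrite (@sum_tuple_prod _ _ _ (fun (j : 'I_i) (t : 'I_n) => if t != x0 then chi R n t (tnth X j) * conjc (chi R n t (tnth Y (widen_ord hil j))) else 0)).
apply: eq_bigr => j _; by rewrite sumK (tnth_nth x0 Y).
Qed.

Lemma liftF_t l (F : l.-tuple 'I_n -> R) (Y : l.-tuple 'I_n) : liftF F Y = F Y.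
Proof. by rewrite /liftF valK. Qed.

Lemma termB l (F : l.-tuple 'I_n -> R) (HF : perm_invariant F) i (X : i.-tuple 'I_n)
  (hil : (i <= l)%N) (B : {set 'I_i}) :
  \sum_(Y : l.-tuple 'I_n) (F Y)%:C * ([forall j in B, tnth X j == nth x0 Y j])%:R =
  \sum_(x : (l - size [seq tnth X j | j <- enum B]).-tuple 'I_n)
      (liftF F ([seq tnth X j | j <- enum B] ++ x))%:C.
Proof.
set s := [seq tnth X j | j <- enum B].
set p : seq 'I_l := [seq widen_ord hil j | j <- enum B].
have up : uniq p.
  by rewrite map_inj_uniq ?enum_uniq // => j1 j2 h; apply/val_inj; exact: (congr1 val h).
have sp : size p = size s by rewrite !size_map.
have [sg hsg] := @perm_ext l p up.
have hs : (size s <= l)%N.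
  by rewrite /s size_map -cardE (leq_trans (max_card _)) // card_ord.
rewrite -(prefix_sum (fun y => (liftF F y)%:C)) //.
rewrite [RHS](eq_bigr (fun Y => (F Y)%:C * (take (size s) Y == s)%:R)); last by move=> Y _; rewrite liftF_t.
rewrite (@perm_reindex l F HF sg (fun Y => (take (size s) Y == s)%:R)).
apply: eq_bigr => Y _; congr (_ * _%:R).
have -> : take (size s) (tpm Y sg) = [seq tnth Y q | q <- p].
  apply: (@eq_from_nth _ x0); first by rewrite [RHS]size_map sp size_takel // size_tuple.
  have hs2 : (size s <= size (tpm Y sg))%N by rewrite size_tuple.
  move=> k; rewrite (size_takel hs2) => hk.
  have hkl : (k < l)%N by apply: leq_trans hs.
  rewrite nth_take //.
  have -> : nth x0 (tpm Y sg) k = tnth (tpm Y sg) (Ordinal hkl) by rewrite (tnth_nth x0).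
  rewrite tnth_mktuple hsg ?sp // (nth_map (Ordinal hkl)) ?sp //.
rewrite /p -map_comp.
congr (nat_of_bool _); apply/forall_inP/eqP => [h|h].
  apply: (iffLR (eq_in_map _ _ _)) => j; rewrite mem_enum => jB /=; rewrite (tnth_nth x0) /=; exact/esym/eqP/h.
move=> j jB; have := (eq_in_map _ _ _).2 h j; rewrite mem_enum => /(_ jB) /= h2. rewrite (tnth_nth x0) in h2. by rewrite h2.
Qed.

Lemma deltaC l (F : l.-tuple 'I_n -> R) (s : seq 'I_n) :
  (delta F s)%:C = ((n ^ (l - size s))%:R)^-1 *
     \sum_(x : (l - size s).-tuple 'I_n) (liftF F (s ++ x))%:C.
Proof. by rewrite /delta rmorphM rmorph_sum fmorphV rmorph_nat. Qed.

Lemma prod_bool (I : finType) (B : {pred I}) (b : I -> bool) :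
  \prod_(j in B) ((b j)%:R : R[i]) = ([forall j in B, b j])%:R.
Proof.
case: (boolP [forall j in B, b j]) => [/forall_inP h|].
  by apply: big1 => j jB; rewrite h.
rewrite negb_forall_in => /existsP [j /andP [jB bj]].
by rewrite (bigD1 j) //= (negbTE bj) mul0r.
Qed.

Lemma part2 l (F : l.-tuple 'I_n -> R) (HF : perm_invariant F) i (X : i.-tuple 'I_n)
  (hil : (i <= l)%N) :
  fpart F X = \sum_(B : {set 'I_i})
        (-1) ^+ (i - #|B|) * (delta F [seq tnth X j | j <- enum B])%:C.
Proof.
rewrite (@kernel l F i X hil).
have nz : (n%:R : R[i]) != 0 by rewrite pnatr_eq0 -lt0n.
have E Y : \prod_(j < i) (n%:R * (tnth X j == nth x0 Y j)%:R - 1) =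
   \sum_(B : {set 'I_i}) (-1) ^+ (i - #|B|) *
      (n%:R ^+ #|B| * ([forall j in B, tnth X j == nth x0 Y j])%:R : R[i]).
  rewrite bigA_distr; apply: eq_bigr => B _.
  rewrite (bigID (mem B)) /= mulrC; congr (_ * _).
    rewrite (eq_bigl [predC B]) // (eq_bigr (fun=> -1)); last by move=> j /negbTE ->.
    rewrite prodr_const; congr (_ ^+ _).
    have h := cardC B; rewrite card_ord in h.
    have hB := max_card (mem B); rewrite card_ord in hB.
    apply/eqP; rewrite -(eqn_add2l #|B|) subnKC //; apply/eqP; rewrite -[RHS]h; congr (_ + _); by apply: eq_card.
  rewrite (eq_bigr (fun j => n%:R * (tnth X j == nth x0 Y j)%:R)); last by move=> j ->.
  by rewrite big_split /= prodr_const prod_bool.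
under eq_bigr => Y _ do rewrite E big_distrr /=.
rewrite exchange_big big_distrr /=; apply: eq_bigr => B _.
rewrite deltaC.
have hb : (#|B| <= l)%N by rewrite (leq_trans (max_card _)) // card_ord.
have sz : size [seq tnth X j | j <- enum B] = #|B| by rewrite size_map -cardE.
transitivity ((-1) ^+ (i - #|B|) * (((n ^ l)%:R)^-1 * n%:R ^+ #|B| *
   \sum_(Y : l.-tuple 'I_n) (F Y)%:C * ([forall j in B, tnth X j == nth x0 Y j])%:R)).
  rewrite -mulrA mulrCA; congr (_ * _); rewrite !big_distrr /=; apply: eq_bigr => Y _.
  rewrite mulrCA; congr (_ * _); ring.
congr (_ * _); rewrite (@termB l F HF i X hil B); congr (_ * _).
rewrite sz -{1}(subnK hb) expnD natrM invfM -mulrA !natrX mulVf ?mulr1 //.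
by rewrite expf_neq0.
Qed.

Lemma part1 l (F : l.+1.-tuple 'I_n -> R) (HF : perm_invariant F) (a : 'I_n) i
  (X : i.-tuple 'I_n) (hi : (i < l.+1)%N) :
  fpart F [tuple of a :: X] = fpart (restr F [:: a]) X - fpart F X.
Proof.
have hil1 : (i.+1 <= l.+1)%N := hi.
have hil0 : (i <= l.+1)%N := ltnW hi.
have hil' : (i <= l.+1 - size [:: a])%N by rewrite /= subn1.
rewrite (@kernel _ F _ _ hil1) (@kernel _ (restr F [:: a]) _ _ hil') (@kernel _ F _ _ hil0).
set P := fun y : seq 'I_n => \prod_(j < i) (n%:R * (tnth X j == nth x0 y j)%:R - 1 : R[i]).
set Q := fun y : seq 'I_n => \prod_(j < i) (n%:R * (tnth X j == nth x0 y j.+1)%:R - 1 : R[i]).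
have E1 (Y : l.+1.-tuple 'I_n) :
  \prod_(j < i.+1) (n%:R * (tnth [tuple of a :: X] j == nth x0 Y j)%:R - 1) =
  n%:R * (a == nth x0 Y 0)%:R * Q Y - Q Y.
  rewrite big_ord_recl tnth0.
  have -> : \prod_(j < i) (n%:R * (tnth [tuple of a :: X] (lift ord0 j) == nth x0 Y (lift ord0 j))%:R - 1 : R[i]) = Q Y.
    by apply: eq_bigr => j _; rewrite tnthS.
  by rewrite mulrBl mul1r.
under eq_bigr => Y _ do rewrite E1 mulrBr.
rewrite sumrB mulrBr; congr (_ - _); last first.
  congr (_ * _).
  pose p : seq 'I_l.+1 := [seq inord j.+1 | j <- iota 0 i].
  have up : uniq p.
    rewrite map_inj_in_uniq ?iota_uniq // => j1 j2; rewrite !mem_iota /= => h1 h2 h.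
    have := congr1 (@nat_of_ord _) h; rewrite !inordK; [by case | |]; by apply: leq_trans hi.
  have [sg hsg] := @perm_ext _ p up.
  rewrite (@perm_reindex _ F HF sg (fun Y => P Y)); apply: eq_bigr => Y _; congr (_ * _).
  apply: eq_bigr => j _; congr (_ * _%:R - 1); congr (_ == _).
  have hjl : (j < l.+1)%N by apply: leq_trans (ltn_ord j) _.
  have -> : nth x0 (tpm Y sg) j = tnth (tpm Y sg) (Ordinal hjl) by rewrite (tnth_nth x0).
  rewrite tnth_mktuple hsg /p ?size_map ?size_iota //= (nth_map 0%N) ?size_iota // nth_iota //.
  by rewrite (tnth_nth x0) inordK // add0n ltnS (leq_trans (ltn_ord j)).
rewrite sum_tuple_cons (bigD1 a) //= [X in _ + X]big1 ?addr0; last first.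
  move=> b hb; apply: big1 => x _.
  by rewrite /= (eq_sym a b) (negbTE hb) mulr0 mul0r mulr0.
rewrite eqxx mulr1 big_distrr /= [RHS]big_distrr /=.
rewrite [RHS](@sum_tuple_eq _ _ _ l (subn1 l.+1) (fun y => (n ^ (l.+1 - 1))%:R^-1 *
     ((liftF F ([:: a] ++ y))%:C * \prod_(j < i) (n%:R * (tnth X j == nth x0 y j)%:R - 1)))).
rewrite subn1 /=.
apply: eq_bigr => x _.
rewrite -(@liftF_t _ F [tuple of a :: x]).
rewrite [LHS](_ : _ = ((n ^ l.+1)%:R^-1 * n%:R) * ((liftF F (a :: x))%:C * Q (a :: x))); last by ring.
congr (_ * _).
rewrite expnS natrM invfM mulrC mulrA mulfV ?mul1r //.
by rewrite pnatr_eq0 -lt0n.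
Qed.
End S.


Theorem lemmaC10 (R : realType) (n l : nat) (hn : (0 < n)%N)
    (F : l.-tuple 'I_n -> R) (HF : perm_invariant F) :
  (forall (a : 'I_n) (i : nat) (X : i.-tuple 'I_n), (i < l)%N ->
     fpart F [tuple of a :: X] = fpart (restr F [:: a]) X - fpart F X)
  /\
  (forall (i : nat) (X : i.-tuple 'I_n), (i <= l)%N ->
     fpart F X = \sum_(B : {set 'I_i})
        (-1) ^+ (i - #|B|) * (delta F [seq tnth X j | j <- enum B])%:C).
Proof.
split.
  move=> a i X hi; case: l F HF hi => [//|l] F HF hi.
  exact: (@part1 R n hn l F HF a i X hi).
move=> i X hil; exact: (@part2 R n hn l F HF i X hil).
Qed.
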